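(* Let $\gamma_\sigma=(\{a,b\},\emptyset,\emptyset,\{(a,b,a)\})$ be the GES on two distinct events with no conflicts, no initial causes, and where the occurrence of $b$ adds $a$ as a cause of $a$ (so $\mathrm{Traces}(\gamma_\sigma)=\{\epsilon,a,b,ab\}$). Then there is no SES $\sigma$ with $\mathrm{Traces}(\sigma)=\mathrm{Traces}(\gamma_\sigma)$.
   Context: GES: $\gamma=(E,\#,\to,\lhd)$ with $\#\subseteq E^2$ irreflexive symmetric, $\to\subseteq E^2$, $\lhd\subseteq E^3$ where $(c,m,t)\in\lhd$ means ''$m$ adds $c$ as a cause of $t$'', requiring $\neg(c\to t)$. $\mathrm{ic}(e)=\{e'\mid e'\to e\}$, $\mathrm{ac}(H,e)=\{e'\mid\exists x\in H.(e',x,e)\in\lhd\}$. For $t=e_1\cdots e_n$, $\overline{t_k}=\{e_1,\ldots,e_k\}$. GES traces: finite sequences of pairwise distinct events, pairwise not in conflict, with $\mathrm{ic}(e_i)\cup\mathrm{ac}(\overline{t_{i-1}},e_i)\subseteq\overline{t_{i-1}}$ for all $i$. SES: $\sigma=(E,\#,\to,\triangleright)$ with $\#\subseteq E^2$ irreflexive symmetric, $\to\subseteq E^2$ a binary relation, $\triangleright\subseteq E^3$ with $(c,d,t)\in\triangleright$ (''$d$ drops cause $c$ of $t$'') implying $c\to t$. $\mathrm{dc}(H,e)=\{e'\mid\exists d\in H.(e',d,e)\in\triangleright\}$. SES traces: finite sequences of pairwise distinct events of $E$, pairwise not in conflict, with $\mathrm{ic}(e_i)\setminus\mathrm{dc}(\overline{t_{i-1}},e_i)\subseteq\overline{t_{i-1}}$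 for all $i$. *)

(* Defs.v *)
From Stdlib Require Import List.
Import ListNotations.

Set Implicit Arguments.

Record GES (T : Type) := {
  ges_E : T -> Prop;
  ges_conf : T -> T -> Prop;
  ges_cause : T -> T -> Prop;            (* e' -> e *)
  ges_add : T -> T -> T -> Prop;         (* (c,m,t): m adds c as a cause of t *)
}.

Definition GES_wf (T : Type) (g : GES T) : Prop :=
  (forall x, ~ ges_conf g x x) /\
  (forall x y, ges_conf g x y -> ges_conf g y x) /\
  (forall c m t, ges_add g c m t -> ~ ges_cause g c t).

Definition ges_ac (T : Type) (g : GES T) (H : list T) (e : T) (e' : T) : Prop :=
  exists x, In x H /\ ges_add g e' x e.

Definition GES_trace (T : Type) (g : GES T) (t : list T) : Prop :=
  NoDup t /\
  (forall e, In e t -> ges_E g e) /\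
  (forall x y, In x t -> In y t -> ~ ges_conf g x y) /\
  (forall pre e post, t = pre ++ e :: post ->
     forall c, (ges_cause g c e \/ ges_ac g pre e c) -> In c pre).

Record SES (T : Type) := {
  ses_E : T -> Prop;
  ses_conf : T -> T -> Prop;
  ses_cause : T -> T -> Prop;            (* e' -> e *)
  ses_drop : T -> T -> T -> Prop;        (* (c,d,t): d drops cause c of t *)
}.

Definition SES_wf (T : Type) (s : SES T) : Prop :=
  (forall x, ~ ses_conf s x x) /\
  (forall x y, ses_conf s x y -> ses_conf s y x) /\
  (forall c d t, ses_drop s c d t -> ses_cause s c t).

Definition ses_dc (T : Type) (s : SES T) (H : list T) (e : T) (e' : T) : Prop :=
  exists d, In d H /\ ses_drop s e' d e.

Definition SES_trace (T : Type) (s : SES T) (t : list T) : Prop :=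
  NoDup t /\
  (forall e, In e t -> ses_E s e) /\
  (forall x y, In x t -> In y t -> ~ ses_conf s x y) /\
  (forall pre e post, t = pre ++ e :: post ->
     forall c, ses_cause s c e -> ~ ses_dc s pre e c -> In c pre).

Definition gamma_sigma (T : Type) (a b : T) : GES T := {|
  ges_E := fun x => x = a \/ x = b;
  ges_conf := fun _ _ => False;
  ges_cause := fun _ _ => False;
  ges_add := fun c m t => c = a /\ m = b /\ t = a;
|}.

(* Main.v *)
Require Import Defs.
From Stdlib Require Import List.
Import ListNotations.

Lemma ges_ok (T : Type) (a b : T) (hab : a <> b) (t : list T) :
  (t = [a] \/ t = [b] \/ t = [a;b]) -> GES_trace (gamma_sigma a b) t.
Proof.
  intros Ht. split; [|split; [|split]].
  - destruct Ht as [ -> | [ -> | -> ] ]; repeat constructor; simpl; intuition congruence.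
  - destruct Ht as [ -> | [ -> | -> ] ]; simpl; intuition.
  - simpl; auto.
  - destruct Ht as [ -> | [ -> | -> ] ];
    intros pre e post Heq c [Hc|[x [Hx [H1 [H2 H3]]]]]; try destruct Hc; subst;
    destruct pre as [|y [|z pre]]; simpl in *; inversion Heq; subst;
      try contradiction; try (destruct pre; discriminate);
      intuition congruence.
Qed.

Theorem lemma13 (T : Type) (a b : T) (hab : a <> b) :
  ~ exists s : SES T, SES_wf s /\
      (forall t : list T, SES_trace s t <-> GES_trace (gamma_sigma a b) t).
Proof.
  intros [s [_ Hs]].
  assert (Ha : SES_trace s [a]) by (apply Hs, ges_ok; auto).
  assert (Hb : SES_trace s [b]) by (apply Hs, ges_ok; auto).
  assert (Hab : SES_trace s [a;b]) by (apply Hs, ges_ok; auto).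
  assert (Hba : SES_trace s [b;a]).
  { destruct Ha as [_ [HaE [_ HaC]]].
    destruct Hb as [_ [HbE [_ HbC]]].
    destruct Hab as [_ [_ [HabF _]]].
    split; [|split; [|split]].
    - constructor; [simpl; intros [H|H]; [congruence|contradiction]|].
      constructor; [simpl; auto|constructor].
    - intros e [<-|[<-|[]]]; [apply HbE|apply HaE]; simpl; auto.
    - intros x y Hx Hy; apply HabF; simpl in *; intuition.
    - intros pre e post Heq c Hc Hdc.
      destruct pre as [|y [|z pre]]; simpl in *; inversion Heq; subst.
      + apply (HbC [] e [] eq_refl c Hc Hdc).
      + exfalso. apply (HaC [] e [] eq_refl c Hc).
        intros [d [[] _]].
      + destruct pre; discriminate. }
  apply Hs in Hba.
  destruct Hba as [_ [_ [_ H]]].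
  specialize (H [b] a [] eq_refl a).
  assert (In a [b]) as Hin.
  { apply H. right. exists b. simpl. auto. }
  simpl in Hin. intuition congruence.
Qed.
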